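(* Let $E$ be a contact Riemannian Lie algebroid with associated almost contact Riemannian structure $(F_E,\xi,\eta,g_E)$. Then $\mathcal{L}_\xi\eta=0$, $\mathcal{L}_\xi(d_E\eta)=0$, and $(\mathcal{L}_{F_E(s_1)}\eta)(s_2)=(\mathcal{L}_{F_E(s_2)}\eta)(s_1)$ for all $s_1,s_2\in\Gamma(E)$.
   Context: A Lie algebroid $(E,\rho_E,[\cdot,\cdot]_E)$ over $M$ is a vector bundle with anchor $\rho_E:E\to TM$ and Lie bracket on $\Gamma(E)$ with $[s_1,fs_2]_E=f[s_1,s_2]_E+\rho_E(s_1)(f)s_2$. For a 1-form $\eta$, $(d_E\eta)(s_1,s_2)=\frac12\{\rho_E(s_1)(\eta(s_2))-\rho_E(s_2)(\eta(s_1))-\eta([s_1,s_2]_E)\}$. For $E$ of rank $2m+1$, an almost contact Riemannian structure $(F_E,\xi,\eta,g_E)$: endomorphism $F_E$, $\xi\in\Gamma(E)$, $\eta\in\Gamma(E^* )$, bundle metric $g_E$ with $F_E^2=-I_E+\eta\otimes\xi$, $\eta(\xi)=1$, $g_E(F_Es_1,F_Es_2)=g_E(s_1,s_2)-\eta(s_1)\eta(s_2)$; fundamental form $\Omega_E(s_1,s_2)=g_E(s_1,F_Es_2)$. $E$ is contact Riemannian if also $\eta\wedge(d_E\eta)^m$ vanishes nowhere and $d_E\eta=\Omega_E$. Lie derivatives: $(\mathcal{L}_s\eta)(s')=\rho_E(s)(\eta(s'))-\eta([s,s']_E)$; for a 2-form $\omega$, $(\mathcal{L}_s\omega)(s_1,s_2)=\rho_E(s)(\omega(s_1,s_2))-\omega([s,s_1]_E,s_2)-\omega(s_1,[s,s_2]_E)$.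 *)

(* Defs.v *)
From mathcomp Require Import all_boot all_order all_algebra all_fingroup.
Set Implicit Arguments. Unset Strict Implicit. Unset Printing Implicit Defensive.
Import Order.TTheory GRing.Theory Num.Theory.
Local Open Scope ring_scope.

(* Model of a rank-n vector bundle E over a base M:
   - the fibre E_x is identified with 'rV[R]_n (pointwise identification);
   - Cinf : the algebra of smooth functions on M (a predicate on M -> R);
   - Gam  : the smooth sections Gamma(E) (a predicate on M -> 'rV_n).
   Bundle maps / tensors are given pointwise:
   - endomorphism F_E : M -> 'M_n, acting on rows  u |-> u *m F x;
   - section xi : M -> 'rV_n;
   - 1-form eta : M -> 'cV_n, acting by u |-> (u *m eta x) 0 0;
   - bundle metric g : M -> 'M_n,  g_x(u,v) = (u *m g x *m v^T) 0 0. *)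

Section Defs.
Variables (R : realFieldType) (M : Type) (n : nat).

Definition fsec := M -> 'rV[R]_n.

Definition function_algebra (Cinf : (M -> R) -> Prop) : Prop :=
  [/\ forall a : R, Cinf (fun _ => a),
      forall f h, Cinf f -> Cinf h -> Cinf (fun x => f x + h x),
      forall f, Cinf f -> Cinf (fun x => - f x) &
      forall f h, Cinf f -> Cinf h -> Cinf (fun x => f x * h x)].

Definition section_module (Cinf : (M -> R) -> Prop) (Gam : fsec -> Prop) : Prop :=
  [/\ Gam (fun _ => 0),
      forall s t, Gam s -> Gam t -> Gam (fun x => s x + t x) &
      forall f s, Cinf f -> Gam s -> Gam (fun x => f x *: s x)].

Record lie_algebroid (Cinf : (M -> R) -> Prop) (Gam : fsec -> Prop)
  (rho : fsec -> (M -> R) -> (M -> R)) (br : fsec -> fsec -> fsec) : Prop := {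
  la_fun : function_algebra Cinf;
  la_sec : section_module Cinf Gam;
  (* rho(s) is a vector field, i.e. an R-linear derivation of Cinf *)
  la_ax1 : forall s f, Gam s -> Cinf f -> Cinf (rho s f);
  la_ax2 : forall s f h, Gam s -> Cinf f -> Cinf h ->
     rho s (fun x => f x + h x) = (fun x => rho s f x + rho s h x);
  la_ax3 : forall s (a : R) f, Gam s -> Cinf f ->
     rho s (fun x => a * f x) = (fun x => a * rho s f x);
  la_ax4 : forall s f h, Gam s -> Cinf f -> Cinf h ->
     rho s (fun x => f x * h x) = (fun x => f x * rho s h x + h x * rho s f x);
  (* rho is a bundle map, i.e. Cinf-linear in the section *)
  la_ax5 : forall s t f, Gam s -> Gam t -> Cinf f ->
     rho (fun x => s x + t x) f = (fun x => rho s f x + rho t f x);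
  la_ax6 : forall h s f, Cinf h -> Gam s -> Cinf f ->
     rho (fun x => h x *: s x) f = (fun x => h x * rho s f x);
  la_ax7 : forall s t, Gam s -> Gam t -> Gam (br s t);
  la_ax8 : forall s t u, Gam s -> Gam t -> Gam u ->
     br s (fun x => t x + u x) = (fun x => br s t x + br s u x);
  la_ax9 : forall s (a : R) t, Gam s -> Gam t ->
     br s (fun x => a *: t x) = (fun x => a *: br s t x);
  la_ax10 : forall s t, Gam s -> Gam t -> br s t = (fun x => - br t s x);
  la_ax11 : forall s t u, Gam s -> Gam t -> Gam u ->
     (fun x => br s (br t u) x + br t (br u s) x + br u (br s t) x) = (fun _ => 0);
  la_ax12 : forall s f t, Gam s -> Cinf f -> Gam t ->
     br s (fun x => f x *: t x) = (fun x => f x *: br s t x + rho s f x *: t x);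
  la_ax13 : forall s t f, Gam s -> Gam t -> Cinf f ->
     rho (br s t) f = (fun x => rho s (rho t f) x - rho t (rho s f) x)
}.

Definition etaS (eta : M -> 'cV[R]_n) (s : fsec) : M -> R :=
  fun x => (s x *m eta x) 0 0.
Definition FS (F : M -> 'M[R]_n) (s : fsec) : fsec := fun x => s x *m F x.
Definition gS (g : M -> 'M[R]_n) (s t : fsec) : M -> R :=
  fun x => (s x *m g x *m (t x)^T) 0 0.
Definition OmegaS (g F : M -> 'M[R]_n) (s1 s2 : fsec) : M -> R :=
  gS g s1 (FS F s2).

(* exterior derivative of a 1-form (with the paper's 1/2 convention) *)
Definition dE (rho : fsec -> (M -> R) -> (M -> R)) (br : fsec -> fsec -> fsec)
  (eta : fsec -> M -> R) (s1 s2 : fsec) : M -> R :=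
  fun x => 2^-1 * (rho s1 (eta s2) x - rho s2 (eta s1) x - eta (br s1 s2) x).

Definition Lie1 (rho : fsec -> (M -> R) -> (M -> R)) (br : fsec -> fsec -> fsec)
  (s : fsec) (eta : fsec -> M -> R) (s' : fsec) : M -> R :=
  fun x => rho s (eta s') x - eta (br s s') x.
Definition Lie2 (rho : fsec -> (M -> R) -> (M -> R)) (br : fsec -> fsec -> fsec)
  (s : fsec) (om : fsec -> fsec -> M -> R) (s1 s2 : fsec) : M -> R :=
  fun x => rho s (om s1 s2) x - om (br s s1) s2 x - om s1 (br s s2) x.

Record almost_contact_riemannian (Cinf : (M -> R) -> Prop) (Gam : fsec -> Prop)
  (F : M -> 'M[R]_n) (xi : fsec) (eta : M -> 'cV[R]_n) (g : M -> 'M[R]_n) : Prop := {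
  acr_xi : Gam xi;
  acr_F : forall s, Gam s -> Gam (FS F s);
  acr_eta : forall s, Gam s -> Cinf (etaS eta s);
  acr_g : forall s t, Gam s -> Gam t -> Cinf (gS g s t);
  acr_F2 : forall x, F x *m F x = - 1%:M + eta x *m xi x;
  acr_etaxi : forall x, (xi x *m eta x) 0 0 = 1;
  acr_gsym : forall x, (g x)^T = g x;
  acr_gpos : forall x (u : 'rV[R]_n), u != 0 -> 0 < (u *m g x *m u^T) 0 0;
  acr_gF : forall x, F x *m g x *m (F x)^T = g x - eta x *m (eta x)^T
}.

End Defs.

(* value of the top form  eta /\ omega^m  on vectors v_0..v_2m of a fibre
   'rV_(2m+1) (up to a positive normalising constant, irrelevant for
   non-vanishing) *)
Definition wedge_top (R : realFieldType) (m : nat) (e : 'cV[R]_(m.*2.+1))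
  (om : 'rV[R]_(m.*2.+1) -> 'rV[R]_(m.*2.+1) -> R)
  (v : 'I_(m.*2.+1) -> 'rV[R]_(m.*2.+1)) : R :=
  \sum_(sg : 'S_(m.*2.+1))
     (-1) ^+ sg * (v (sg ord0) *m e) 0 0 *
     \prod_(k < m) om (v (sg (inord k.*2.+1))) (v (sg (inord k.*2.+2))).

Definition contact_riemannian (R : realFieldType) (M : Type) (m : nat)
  (Cinf : (M -> R) -> Prop) (Gam : fsec R M m.*2.+1 -> Prop)
  (rho : fsec R M m.*2.+1 -> (M -> R) -> (M -> R))
  (br : fsec R M m.*2.+1 -> fsec R M m.*2.+1 -> fsec R M m.*2.+1)
  (F : M -> 'M[R]_(m.*2.+1)) (xi : fsec R M m.*2.+1)
  (eta : M -> 'cV[R]_(m.*2.+1)) (g : M -> 'M[R]_(m.*2.+1)) : Prop :=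
  [/\ lie_algebroid Cinf Gam rho br,
      almost_contact_riemannian Cinf Gam F xi eta g,
      (* eta /\ (d_E eta)^m vanishes nowhere; pointwise d_E eta = Omega_E *)
      forall x, exists v, wedge_top (eta x)
                  (fun u w => (u *m g x *m (w *m F x)^T) 0 0) v != 0 &
      forall s1 s2, Gam s1 -> Gam s2 ->
        dE rho br (etaS eta) s1 s2 = OmegaS g F s1 s2].

(* Main.v *)
Require Import Defs.
From mathcomp Require Import all_boot all_order all_algebra all_fingroup.
From mathcomp Require Import lra.
From Stdlib Require Import FunctionalExtensionality.
Set Implicit Arguments. Unset Strict Implicit. Unset Printing Implicit Defensive.
Import Order.TTheory GRing.Theory Num.Theory.
Local Open Scope ring_scope.

Section Helpers.
Variables (R : realFieldType) (M : Type) (n : nat)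
  (Cinf : (M -> R) -> Prop) (Gam : fsec R M n -> Prop)
  (rho : fsec R M n -> (M -> R) -> (M -> R))
  (br : fsec R M n -> fsec R M n -> fsec R M n).
Hypothesis LA : lie_algebroid Cinf Gam rho br.

Lemma Cc a : Cinf (fun _ => a).
Proof. have [H1 H2 H3 H4] := la_fun LA; exact: H1. Qed.
Lemma CD f h : Cinf f -> Cinf h -> Cinf (fun x => f x + h x).
Proof. have [H1 H2 H3 H4] := la_fun LA; exact: H2. Qed.
Lemma CN f : Cinf f -> Cinf (fun x => - f x).
Proof. have [H1 H2 H3 H4] := la_fun LA; exact: H3. Qed.

Lemma rho_opp s f : Gam s -> Cinf f -> rho s (fun x => - f x) = fun x => - rho s f x.
Proof.
move=> Hs Hf; have := la_ax3 LA (-1) Hs Hf.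
have -> : (fun x => -1 * f x) = (fun x => - f x).
  by apply: functional_extensionality => x; rewrite mulN1r.
move=> ->; apply: functional_extensionality => x; by rewrite mulN1r.
Qed.

Lemma rho_sub s f h : Gam s -> Cinf f -> Cinf h ->
  rho s (fun x => f x - h x) = fun x => rho s f x - rho s h x.
Proof.
move=> Hs Hf Hh.
have := la_ax2 LA Hs Hf (CN Hh) => /= ->.
by rewrite rho_opp.
Qed.

Lemma rho_lin3 s c A B C : Gam s -> Cinf A -> Cinf B -> Cinf C ->
  rho s (fun x => c * (A x - B x - C x)) =
  fun x => c * (rho s A x - rho s B x - rho s C x).
Proof.
move=> Hs HA HB HC.
have HD : Cinf (fun x => A x - B x) by apply: CD => //; apply: CN.
have HE : Cinf (fun x => A x - B x - C x) by apply: CD => //; apply: CN.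
have := la_ax3 LA c Hs HE => /= ->.
rewrite (rho_sub Hs HD HC) (rho_sub Hs HA HB) //.
Qed.

Lemma rho_c0 s : Gam s -> rho s (fun _ => 0) = fun _ => 0.
Proof.
move=> Hs; have := la_ax2 LA Hs (Cc 0) (Cc 0).
have -> : (fun _ : M => (0:R) + 0) = (fun _ => 0).
  by apply: functional_extensionality => x; rewrite addr0.
move=> H; apply: functional_extensionality => x.
have := congr1 (fun f => f x) H => /= H'; lra.
Qed.

Lemma rho_c1 s : Gam s -> rho s (fun _ => 1) = fun _ => 0.
Proof.
move=> Hs; have := la_ax4 LA Hs (Cc 1) (Cc 1).
have -> : (fun _ : M => (1:R) * 1) = (fun _ => 1).
  by apply: functional_extensionality => x; rewrite mulr1.
move=> H; apply: functional_extensionality => x.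
have := congr1 (fun f => f x) H => /= H'; lra.
Qed.

Lemma br_opp s t : Gam s -> Gam t -> br s (fun x => - t x) = fun x => - br s t x.
Proof.
move=> Hs Ht; have := la_ax9 LA (-1) Hs Ht.
have -> : (fun x => (-1 : R) *: t x) = (fun x => - t x).
  by apply: functional_extensionality => x; rewrite scaleN1r.
move=> ->; apply: functional_extensionality => x; by rewrite scaleN1r.
Qed.

End Helpers.

Theorem proposition4p3 (R : realFieldType) (M : Type) (m : nat)
  (Cinf : (M -> R) -> Prop) (Gam : fsec R M m.*2.+1 -> Prop)
  (rho : fsec R M m.*2.+1 -> (M -> R) -> (M -> R))
  (br : fsec R M m.*2.+1 -> fsec R M m.*2.+1 -> fsec R M m.*2.+1)
  (F : M -> 'M[R]_(m.*2.+1)) (xi : fsec R M m.*2.+1)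
  (eta : M -> 'cV[R]_(m.*2.+1)) (g : M -> 'M[R]_(m.*2.+1)) :
  contact_riemannian Cinf Gam rho br F xi eta g ->
  [/\ forall s, Gam s -> Lie1 rho br xi (etaS eta) s = (fun _ => 0),
      forall s1 s2, Gam s1 -> Gam s2 ->
        Lie2 rho br xi (dE rho br (etaS eta)) s1 s2 = (fun _ => 0) &
      forall s1 s2, Gam s1 -> Gam s2 ->
        Lie1 rho br (FS F s1) (etaS eta) s2 = Lie1 rho br (FS F s2) (etaS eta) s1].
Proof.
case=> LA AC _ HdE.
have Hxi := acr_xi AC.
have xieta : forall x, xi x *m eta x = 1%:M.
  by move=> x; rewrite [LHS]mx11_scalar (acr_etaxi AC).
have comm : forall x, F x *m eta x *m xi x = eta x *m xi x *m F x.
  move=> x; have : F x *m (F x *m F x) = (F x *m F x) *m F x by rewrite mulmxA.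
  rewrite (acr_F2 AC) mulmxDr mulmxDl mulmxN mulNmx mulmx1 mul1mx !mulmxA.
  by move/addrI.
have xiF : forall x, xi x *m F x = 0.
  move=> x; set c := (xi x *m F x *m eta x) 0 0.
  have E : xi x *m F x = c *: xi x.
    have := congr1 (mulmx (xi x)) (comm x).
    rewrite !mulmxA xieta mul1mx => <-.
    by rewrite [xi x *m F x *m eta x]mx11_scalar mul_scalar_mx.
  have E2 : xi x *m F x *m F x = 0.
    by rewrite -mulmxA (acr_F2 AC) mulmxDr mulmxN mulmx1 mulmxA xieta mul1mx addNr.
  rewrite E -scalemxAl E scalerA in E2.
  have : (c * c) *: (xi x *m eta x) = 0 by rewrite scalemxAl E2 mul0mx.
  rewrite xieta => /matrixP /(_ 0 0); rewrite !mxE eqxx /= mulr1n mulr1.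
  move/eqP; rewrite mulf_eq0 orbb => /eqP c0.
  by rewrite E c0 scale0r.
have Feta : forall x, F x *m eta x = 0.
  move=> x; have := comm x; rewrite -!mulmxA xiF mulmx0 => H.
  have := congr1 (fun A => A *m eta x) H.
  by rewrite -!mulmxA xieta mulmx1 mul0mx.
have etaT : forall x, (eta x)^T = xi x *m g x.
  move=> x; have := congr1 (mulmx (xi x)) (acr_gF AC x).
  rewrite !mulmxA xiF !mul0mx mulmxBr mulmxA xieta mul1mx => /eqP.
  by rewrite eq_sym subr_eq0 => /eqP.
have Hsym : forall x (u v : 'rV[R]_(m.*2.+1)), (u *m F x *m g x *m (v *m F x)^T) 0 0
                       = (v *m F x *m g x *m (u *m F x)^T) 0 0.
  move=> x u v.
  have T : forall A : 'M[R]_1, A 0 0 = (A^T) 0 0 by move=> A; rewrite mxE.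
  rewrite (T (u *m F x *m g x *m (v *m F x)^T)) !trmx_mul !trmxK (acr_gsym AC) !mulmxA //.
have Heta s : Gam s -> Cinf (etaS eta s) := acr_eta AC (s:=s).
have Exi : etaS eta xi = (fun _ => 1).
  by apply: functional_extensionality => x; rewrite /etaS (acr_etaxi AC).
have P1 : forall s, Gam s -> Lie1 rho br xi (etaS eta) s = (fun _ => 0).
  move=> s Hs; apply: functional_extensionality => x.
  have := congr1 (fun f => f x) (HdE xi s Hxi Hs).
  rewrite /dE /OmegaS /gS /FS /= Exi (rho_c1 LA Hs) trmx_mul mulmxA -etaT.
  rewrite -trmx_mul Feta trmx0 !mul0mx mxE /Lie1 => H.
  lra.
have L1 : forall s, Gam s -> rho xi (etaS eta s) = etaS eta (br xi s).
  move=> s Hs; apply: functional_extensionality => x.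
  have := congr1 (fun f => f x) (P1 s Hs); rewrite /Lie1 /= => H; lra.
split => //.
- move=> a b Ha Hb; apply: functional_extensionality => x.
  have Hxa := la_ax7 LA Hxi Ha; have Hxb := la_ax7 LA Hxi Hb.
  rewrite /Lie2 /dE.
  rewrite (rho_lin3 LA _ Hxi (la_ax1 LA Ha (Heta _ Hb))
     (la_ax1 LA Hb (Heta _ Ha)) (Heta _ (la_ax7 LA Ha Hb))).
  have E1 := congr1 (fun f => f x) (la_ax13 LA Hxi Ha (Heta _ Hb)).
  have E2 := congr1 (fun f => f x) (la_ax13 LA Hxi Hb (Heta _ Ha)).
  rewrite /= (L1 _ Hb) in E1; rewrite /= (L1 _ Ha) in E2.
  rewrite (L1 _ (la_ax7 LA Ha Hb)).
  have J : etaS eta (br xi (br a b)) x + etaS eta (br a (br b xi)) x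
           + etaS eta (br b (br xi a)) x = 0.
    have := congr1 (fun f => (f x *m eta x) 0 0) (la_ax11 LA Hxi Ha Hb).
    have AD : forall u v : 'M[R]_1, (u + v) 0 0 = u 0 0 + v 0 0 by move=> u v; rewrite mxE.
    have Z0 : (0 : 'M[R]_1) 0 0 = 0 by rewrite mxE.
    by rewrite /= mul0mx !mulmxDl !AD Z0.
  have K1 : etaS eta (br (br xi a) b) x = - etaS eta (br b (br xi a)) x.
    by rewrite /etaS (la_ax10 LA Hxa Hb) mulNmx mxE.
  have K2 : etaS eta (br a (br xi b)) x = - etaS eta (br a (br b xi)) x.
    by rewrite /etaS (la_ax10 LA Hxi Hb) (br_opp LA Ha (la_ax7 LA Hb Hxi)) mulNmx mxE.
  rewrite K1 K2 E1 E2; lra.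
- move=> a b Ha Hb; apply: functional_extensionality => x.
  have HFa := acr_F AC Ha; have HFb := acr_F AC Hb.
  have Z : forall s, etaS eta (FS F s) = (fun _ => 0).
    by move=> s; apply: functional_extensionality => y; rewrite /etaS /FS -mulmxA Feta mulmx0 mxE.
  have H1 := congr1 (fun f => f x) (HdE _ _ HFa Hb).
  have H2 := congr1 (fun f => f x) (HdE _ _ HFb Ha).
  rewrite /dE /OmegaS /gS /FS /= in H1 H2.
  rewrite -/(FS F a) -/(FS F b) !Z (rho_c0 LA Hb) (rho_c0 LA Ha) in H1 H2.
  rewrite Hsym in H1; rewrite /Lie1; lra.
Qed.
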